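(* For every BIMS channel with capacity $C$ and every $R\ge0$, the following hold (as inequalities in $[-\infty,+\infty]$): (a) Strong converse exponent: $E_{\rm sc}^{\rm bsc}(R;C)\le E_{\rm sc}(R)\le E_{\rm sc}^{\rm bec}(R;C)$. (b) Sphere-packing exponent: $E_{\rm sp}^{\rm bsc}(R;C)\le E_{\rm sp}(R)\le E_{\rm sp}^{\rm bec}(R;C)$. (c) Generalized Feinstein exponent: $E_{\rm gfb}^{\rm bsc}(R;C)\le E_{\rm gfb}(R)\le E_{\rm gfb}^{\rm bec}(R;C)$.
   Context: A BIMS (binary-input memoryless symmetric) channel is a memoryless channel with input alphabet $\{x_0,x_1\}$, finite output alphabet $\mathcal Y$ and transition probabilities $P_{Y|X}(y|x)$. It is symmetric in Gallager's sense: the columns of the $2\times|\mathcal Y|$ transition matrix (rows indexed by inputs) can be partitioned into submatrices such that, in each submatrix, every row is a permutation of every other row and every column is a permutation of every other column. Inputs are equiprobable and logarithms are base 2. The capacity $C$ is $I(X;Y)$ under equiprobable inputs. For $\rho>-1$, $$F(\rho)=\sum_{x}\tfrac12\sum_{y:\,P_{Y|X}(y|x)>0}P_{Y|X}(y|x)\left(\frac{\tfrac12\sum_{x'}P_{Y|X}(y|x')^{1/(1+\rho)}}{P_{Y|X}(y|x)^{1/(1+\rho)}}\right)^{\rho},$$ and $E_0(\rho)=-\log F(\rho)$. The exponents are $$E_{\rm sc}(R)=\sup_{-1<\rho\le0}\bigl(E_0(\rho)-\rho R\bigr),\qquad E_{\rm sp}(R)=\sup_{\rho>0}\bigl(E_0(\rho)-\rho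 R\bigr),\qquad E_{\rm gfb}(R)=\sup_{\rho\ge0}\frac{E_0(\rho)-\rho R}{1+\rho}.$$ The quantities with superscript bec (resp. bsc) are defined by the same formulas with $E_0(\rho)$ replaced by $-\log F^{\rm bec}(\rho;C)$ (resp. $-\log F^{\rm bsc}(\rho;C)$), where $$F^{\rm bec}(\rho;C)=1+(2^{-\rho}-1)C,$$ $$F^{\rm bsc}(\rho;C)=2^{-\rho}\bigl(\varepsilon^{1/(1+\rho)}+(1-\varepsilon)^{1/(1+\rho)}\bigr)^{1+\rho},\qquad \varepsilon=h^{-1}(1-C),$$ $h$ is the binary entropy function and $h^{-1}$ its inverse on $[0,\tfrac12]$. *)

(* Defs.v *)
From Stdlib Require Import Reals Lra List Permutation Classical ClassicalEpsilon.
Import ListNotations.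
Open Scope R_scope.

Definition log2 (x : R) : R := ln x / ln 2.

(** Real power with the convention 0^a = 0 (only used with a > 0). *)
Definition powr (x a : R) : R := if Rlt_dec 0 x then Rpower x a else 0.

Definition Rsum_list (l : list R) : R := fold_right Rplus 0 l.
Definition sumY (n : nat) (f : nat -> R) : R := Rsum_list (map f (seq 0 n)).
Definition sumX (f : bool -> R) : R := f false + f true.

(** A binary-input channel with finite output alphabet {0,...,n-1}:
    W x y = P_{Y|X}(y|x). *)
Definition is_channel (n : nat) (W : bool -> nat -> R) : Prop :=
  (forall x y, (y < n)%nat -> 0 <= W x y) /\
  (forall x, sumY n (W x) = 1).

(** Gallager symmetry: the columns are partitioned into blocks (block label
    blk y); in each block every row is a permutation of every other row and
    every column is a permutation of every other column. *)
Definition gallager_symmetric (n : nat) (W : bool -> nat -> R) : Prop :=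
  exists blk : nat -> nat, forall k : nat,
    let cols := filter (fun y => Nat.eqb (blk y) k) (seq 0 n) in
    Permutation (map (W false) cols) (map (W true) cols) /\
    (forall y y', In y cols -> In y' cols ->
       Permutation [W false y; W true y] [W false y'; W true y']).

Definition BIMS (n : nat) (W : bool -> nat -> R) : Prop :=
  is_channel n W /\ gallager_symmetric n W.

Definition PY (W : bool -> nat -> R) (y : nat) : R := / 2 * sumX (fun x => W x y).

(** Capacity = I(X;Y) under equiprobable inputs (0 log 0 = 0). *)
Definition capacity (n : nat) (W : bool -> nat -> R) : R :=
  sumX (fun x => / 2 * sumY n (fun y =>
    if Rlt_dec 0 (W x y) then W x y * log2 (W x y / PY W y) else 0)).

Definition Fch (n : nat) (W : bool -> nat -> R) (rho : R) : R :=
  sumX (fun x => / 2 * sumY n (fun y =>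
    if Rlt_dec 0 (W x y) then
      W x y * Rpower
        ((/ 2 * sumX (fun x' => powr (W x' y) (/ (1 + rho))))
           / powr (W x y) (/ (1 + rho))) rho
    else 0)).

Definition E0ch (n : nat) (W : bool -> nat -> R) (rho : R) : R :=
  - log2 (Fch n W rho).

Definition hb (p : R) : R :=
  - (if Rlt_dec 0 p then p * log2 p else 0)
  - (if Rlt_dec 0 (1 - p) then (1 - p) * log2 (1 - p) else 0).

Definition Fbec (rho C : R) : R := 1 + (Rpower 2 (- rho) - 1) * C.
Definition E0bec (C rho : R) : R := - log2 (Fbec rho C).

(** F^bsc with crossover probability eps (eps = h^{-1}(1-C)). *)
Definition Fbsc (rho eps : R) : R :=
  Rpower 2 (- rho) *
  Rpower (powr eps (/ (1 + rho)) + powr (1 - eps) (/ (1 + rho))) (1 + rho).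
Definition E0bsc (eps rho : R) : R := - log2 (Fbsc rho eps).

Inductive Rbar : Type := Fin (r : R) | PInf | MInf.

Definition Rbar_le (x y : Rbar) : Prop :=
  match x, y with
  | MInf, _ => True
  | _, PInf => True
  | Fin a, Fin b => a <= b
  | _, _ => False
  end.

Definition Rbar_sup (P : R -> Prop) : Rbar.
Proof.
  destruct (excluded_middle_informative (exists x, P x)) as [ne|_].
  - destruct (excluded_middle_informative (bound P)) as [b|_].
    + exact (Fin (proj1_sig (completeness P b ne))).
    + exact PInf.
  - exact MInf.
Defined.

Definition Esc (E0 : R -> R) (Rt : R) : Rbar :=
  Rbar_sup (fun v => exists rho, -1 < rho <= 0 /\ v = E0 rho - rho * Rt).
Definition Esp (E0 : R -> R) (Rt : R) : Rbar :=
  Rbar_sup (fun v => exists rho, 0 < rho /\ v = E0 rho - rho * Rt).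
Definition Egfb (E0 : R -> R) (Rt : R) : Rbar :=
  Rbar_sup (fun v => exists rho, 0 <= rho /\ v = (E0 rho - rho * Rt) / (1 + rho)).

(* Main.v *)
Require Import Defs.
From Stdlib Require Import Reals Lra Psatz List FunctionalExtensionality Lia ClassicalEpsilon.
From Coquelicot Require Coquelicot.
Open Scope R_scope.
Lemma exp_le_mono x y : x <= y -> exp x <= exp y.
Proof. intros [h|h]. left; apply exp_increasing; auto. subst; lra. Qed.

Lemma P_nonneg_core (L M : forall y, 0 <= y -> Prop) : True.
Proof. auto. Qed.

Section P.
Hypothesis L_nonneg : forall y, 0 <= y -> 0 <= y * (exp y + 1) - 2 * (exp y - 1).
Hypothesis M_nonneg : forall y, 0 <= y -> 0 <= exp y * exp y - 1 - 2 * y * exp y.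
Lemma P_nonneg s q w : s + q = 1 -> 0 < s -> 0 <= w ->
  0 <= q * w * (exp (s*w) + exp (-q*w)) - (1 + exp (s*w)) * (1 - exp (-q*w)).
Proof.
  intros hsq hs hw.
  destruct (Rtotal_order q 0) as [hq|[hq|hq]].
  - set (y := -q*w). assert (hy : 0 <= y) by (unfold y; nra).
    assert (hE : exp (s*w) = exp w * exp y).
    { rewrite <- exp_plus. f_equal. unfold y. replace s with (1-q) by lra. ring. }
    assert (h1 : 1 <= exp w) by (rewrite <- exp_0; apply exp_le_mono; lra).
    pose proof (M_nonneg y hy). pose proof (exp_ineq1_le y).
    pose proof (exp_pos y).
    replace (q*w) with (-y) by (unfold y; ring).
    rewrite hE. fold y.
    assert (0 <= (exp w - 1) * (exp y * (exp y - 1 - y))).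
    { apply Rmult_le_pos. lra. apply Rmult_le_pos; lra. }
    replace (-q*w) with y by (unfold y; ring).
    nra.
  - subst q. replace (-0*w) with 0 by ring. rewrite exp_0. lra.
  - set (y := q*w). assert (hy : 0 <= y) by (unfold y; nra).
    assert (hY : exp (-q*w) * exp y = 1).
    { unfold y. rewrite <- exp_plus. replace (-q*w + q*w) with 0 by ring. apply exp_0. }
    assert (h1 : 1 <= exp (s*w)) by (rewrite <- exp_0; apply exp_le_mono; nra).
    pose proof (L_nonneg y hy).
    pose proof (exp_pos y). pose proof (exp_pos (-q*w)).
    pose proof (exp_ineq1_le y).
    set (E := exp (s*w)) in *. set (Eq := exp (-q*w)) in *. set (Y := exp y) in *.
    replace (q*w) with y by (unfold y; ring).
    assert (key : (y * E * Y + y - (1+E)*(Y-1)) = (1+E)/2 * (y*(Y+1) - 2*(Y-1)) + y*(Y-1)*(E-1)/2) by field.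
    assert (0 <= y * E * Y + y - (1+E)*(Y-1)).
    { rewrite key. apply Rplus_le_le_0_compat. apply Rmult_le_pos; lra.
      apply Rmult_le_pos; [|lra]. apply Rmult_le_pos; [|lra]. apply Rmult_le_pos; lra. }
    assert (e : y * (E + Eq) - (1 + E) * (1 - Eq) = Eq * (y * E * Y + y - (1+E)*(Y-1))).
    { replace (Eq * (y * E * Y + y - (1+E)*(Y-1))) with (y*E*(Eq*Y) + y*Eq - (1+E)*(Eq*Y - Eq)) by ring.
      rewrite hY. ring. }
    rewrite e. apply Rmult_le_pos; lra.
Qed.
End P.

Module Calc.
Import Coquelicot.Coquelicot.
Lemma mono_le (f df : R -> R) a b : a <= b ->
  (forall x, a <= x <= b -> is_derive f x (df x)) ->
  (forall x, a <= x <= b -> 0 <= df x) -> f a <= f b.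
Proof.
  intros hab hd hp.
  destruct (MVT_gen f a b df) as [c [hc e]].
  - intros x hx. apply hd. rewrite Rmin_left in hx by lra. rewrite Rmax_right in hx by lra. lra.
  - intros x hx. rewrite Rmin_left in hx by lra. rewrite Rmax_right in hx by lra.
    apply continuity_pt_filterlim. apply (ex_derive_continuous (V:=R_NormedModule)). exists (df x). apply hd; lra.
  - rewrite Rmin_left in hc by lra. rewrite Rmax_right in hc by lra.
    assert (0 <= df c) by (apply hp; lra). nra.
Qed.

Definition sg r := / (1 + r).
Definition Lf r w := ln (1 + exp (sg r * w)).
Definition Phi r w := exp ((1+r) * Lf r w) / (1 + exp w).
Definition Psi w := ln (1 + exp w) - w * exp w / (1 + exp w).
Definition gR r w := exp (r * Lf r w) * (1 - exp (-(1 - sg r) * w)).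
Definition RR r w := gR r w / w.
Definition dPhi r w := exp (r * Lf r w) * (exp (sg r * w) - exp w) / (1 + exp w)^2.
Definition dPsi w := - (w * exp w) / (1 + exp w)^2.
Definition dRR r w := exp (r*Lf r w) / (1 + exp (sg r*w)) *
   ((1 - sg r) * w * (exp (sg r*w) + exp (-(1-sg r)*w))
    - (1 + exp (sg r * w))*(1 - exp (-(1-sg r)*w))) / w^2.

Lemma expLf r w : exp (Lf r w) = 1 + exp (sg r * w).
Proof. unfold Lf. apply exp_ln. pose proof (exp_pos (sg r * w)). lra. Qed.

Lemma exp1r r w : -1 < r -> exp ((1+r) * Lf r w) = exp (r * Lf r w) * (1 + exp (sg r * w)).
Proof. intros. rewrite <- expLf, <- exp_plus. f_equal. ring. Qed.

Lemma d_Psi w : is_derive Psi w (dPsi w).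
Proof.
  unfold Psi, dPsi. pose proof (exp_pos w).
  auto_derive. lra. field. lra.
Qed.

Lemma d_Phi r w : -1 < r -> is_derive (Phi r) w (dPhi r w).
Proof.
  intros hr. unfold Phi, dPhi. pose proof (exp_pos w). pose proof (exp_pos (sg r * w)).
  unfold Lf. auto_derive. repeat split; lra.
  fold (Lf r w). rewrite exp1r by lra. unfold sg in *. field. lra.
Qed.

Lemma d_RR r w : -1 < r -> 0 < w -> is_derive (RR r) w (dRR r w).
Proof.
  intros hr hw. unfold RR, gR, dRR. pose proof (exp_pos w). pose proof (exp_pos (sg r * w)).
  pose proof (exp_pos (-(1-sg r) * w)).
  unfold Lf. auto_derive. repeat split; lra.
  fold (Lf r w). unfold sg in *. field. split; lra.
Qed.

Lemma L_nonneg y : 0 <= y -> 0 <= y * (exp y + 1) - 2 * (exp y - 1).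
Proof.
  intros hy.
  assert (h := mono_le (fun y => y * (exp y + 1) - 2 * (exp y - 1))
     (fun y => exp y * (exp (-y) - 1 + y)) 0 y hy).
  cbv beta in h. rewrite exp_0 in h.
  replace (0 * (1+1) - 2*(1-1)) with 0 in h by ring.
  apply h.
  - intros x _. auto_derive; auto. rewrite exp_Ropp. field. apply Rgt_not_eq, exp_pos.
  - intros x hx. apply Rmult_le_pos. left; apply exp_pos.
    pose proof (exp_ineq1_le (-x)). lra.
Qed.

Lemma M_nonneg y : 0 <= y -> 0 <= exp y * exp y - 1 - 2 * y * exp y.
Proof.
  intros hy.
  assert (h := mono_le (fun y => exp y * exp y - 1 - 2 * y * exp y)
     (fun y => 2 * exp y * (exp y - 1 - y)) 0 y hy).
  cbv beta in h. rewrite exp_0 in h.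
  replace (1 * 1 - 1 - 2 * 0 * 1) with 0 in h by ring.
  apply h.
  - intros x _. auto_derive; auto. ring.
  - intros x hx. pose proof (exp_ineq1_le x). pose proof (exp_pos x). nra.
Qed.

Lemma sg_pos r : -1 < r -> 0 < sg r.
Proof. intros; unfold sg; apply Rinv_0_lt_compat; lra. Qed.

Lemma dRR_nonneg r w : -1 < r -> 0 < w -> 0 <= dRR r w.
Proof.
  intros hr hw. unfold dRR.
  pose proof (P_nonneg L_nonneg M_nonneg (sg r) (1 - sg r) w ltac:(ring) (sg_pos r hr) ltac:(lra)).
  pose proof (exp_pos (sg r * w)). pose proof (exp_pos (r * Lf r w)).
  unfold Rdiv. apply Rmult_le_pos. apply Rmult_le_pos.
  apply Rmult_le_pos. lra. left; apply Rinv_0_lt_compat; lra. lra.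
  left; apply Rinv_0_lt_compat; nra.
Qed.

Lemma RR_mono r a b : -1 < r -> 0 < a -> a <= b -> RR r a <= RR r b.
Proof.
  intros hr ha hab. apply (mono_le (RR r) (dRR r)); auto.
  - intros x hx. apply d_RR; lra.
  - intros x hx. apply dRR_nonneg; lra.
Qed.

Lemma dPhi_RR r w : -1 < r -> 0 < w -> dPhi r w = RR r w * dPsi w.
Proof.
  intros hr hw. unfold dPhi, RR, gR, dPsi.
  assert (e : exp (-(1 - sg r) * w) * exp w = exp (sg r * w)).
  { rewrite <- exp_plus. f_equal. ring. }
  pose proof (exp_pos w).
  rewrite <- e. field. split; lra.
Qed.

Lemma dPhi0 r : dPhi r 0 = 0.
Proof. unfold dPhi. rewrite Rmult_0_r, exp_0. field. Qed.
Lemma dPsi0 : dPsi 0 = 0.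
Proof. unfold dPsi. field. rewrite exp_0. lra. Qed.


Lemma dPsi_le w : 0 <= w -> dPsi w <= 0.
Proof.
  intros hw. unfold dPsi. pose proof (exp_pos w).
  assert (0 <= w * exp w / (1 + exp w)^2).
  { unfold Rdiv. apply Rmult_le_pos. nra. left. apply Rinv_0_lt_compat. nra. }
  unfold Rdiv in *. lra.
Qed.

Definition Gt r l x := Phi r x - l * Psi x.

Lemma d_Gt r l x : -1 < r -> is_derive (Gt r l) x (dPhi r x - l * dPsi x).
Proof.
  intros hr. unfold Gt. apply (is_derive_minus (Phi r) (fun x => l * Psi x)).
  apply d_Phi; auto. apply (is_derive_scal Psi). apply d_Psi.
Qed.

Lemma tangent_w r ws w : -1 < r -> 0 < ws -> 0 <= w ->
  Gt r (RR r ws) w <= Gt r (RR r ws) ws.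
Proof.
  intros hr hws hw. set (l := RR r ws).
  destruct (Rle_dec w ws) as [h|h].
  - apply (mono_le (Gt r l) (fun x => dPhi r x - l * dPsi x)); auto.
    + intros x hx. apply d_Gt; auto.
    + intros x hx. destruct (Req_dec x 0) as [e|e].
      * subst x. rewrite dPhi0, dPsi0. lra.
      * rewrite dPhi_RR by lra. pose proof (dPsi_le x ltac:(lra)).
        assert (RR r x <= l) by (apply RR_mono; lra). nra.
  - assert (- Gt r l ws <= - Gt r l w); [|lra].
    apply (mono_le (fun x => - Gt r l x) (fun x => - (dPhi r x - l * dPsi x))); [lra| |].
    + intros x hx. apply (is_derive_opp (Gt r l)). apply d_Gt; auto.
    + intros x hx. rewrite dPhi_RR by lra. pose proof (dPsi_le x ltac:(lra)).
      assert (l <= RR r x) by (apply RR_mono; lra). nra.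
Qed.

Lemma ln_le_xm1 x : 0 < x -> ln x <= x - 1.
Proof. intros hx. pose proof (exp_ineq1_le (ln x)). rewrite exp_ln in H; lra. Qed.

Lemma ln_ge0 x : 1 <= x -> 0 <= ln x.
Proof. intros [h|h]. rewrite <- ln_1. left. apply ln_increasing; lra. subst; rewrite ln_1; lra. Qed.

Lemma Phi_lb r w : -1 < r -> exp w / (1 + exp w) <= Phi r w.
Proof.
  intros hr. unfold Phi. pose proof (exp_pos w).
  apply Rmult_le_compat_r. left; apply Rinv_0_lt_compat; lra.
  apply exp_le_mono.
  assert (sg r * w <= Lf r w).
  { unfold Lf. rewrite <- (ln_exp (sg r * w)) at 1.
    pose proof (exp_pos (sg r * w)).
    left; apply ln_increasing; lra. }
  replace w with ((1+r) * (sg r * w)) at 1 by (unfold sg; field; lra).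
  apply Rmult_le_compat_l; lra.
Qed.

Lemma Psi_bounds w : 0 <= w -> 0 <= Psi w <= (1 + w) / exp w.
Proof.
  intros hw. pose proof (exp_pos w).
  assert (e : Psi w = ln (1 + / exp w) + w / (1 + exp w)).
  { unfold Psi. replace (1 + exp w) with (exp w * (1 + / exp w)) at 1 by (field; lra).
    rewrite ln_mult. rewrite ln_exp. field. lra. lra.
    pose proof (Rinv_0_lt_compat _ H). lra. }
  rewrite e.
  pose proof (Rinv_0_lt_compat _ H).
  pose proof (ln_le_xm1 (1 + / exp w) ltac:(lra)).
  pose proof (ln_ge0 (1 + / exp w) ltac:(lra)).
  assert (0 <= w / (1 + exp w) <= w / exp w).
  { split. unfold Rdiv; apply Rmult_le_pos; [lra|left; apply Rinv_0_lt_compat; lra].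
    unfold Rdiv. apply Rmult_le_compat_l. lra. apply Rinv_le_contravar; lra. }
  split. lra.
  replace ((1 + w) / exp w) with (/ exp w + w / exp w) by (field; lra). lra.
Qed.

Lemma exp_sq_lb w : 0 <= w -> w * w <= 4 * exp w.
Proof.
  intros hw. replace w with (w/2 + w/2) at 3 by field. rewrite exp_plus.
  pose proof (exp_ineq1_le (w/2)). nra.
Qed.

Lemma Gt_limit r l ws : -1 < r ->
  (forall w, ws <= w -> Gt r l w <= Gt r l ws) -> 1 <= Gt r l ws.
Proof.
  intros hr H.
  destruct (Rle_lt_dec 1 (Gt r l ws)) as [h|h]; auto. exfalso.
  set (eps := 1 - Gt r l ws). set (K := 1 + 5 * Rabs l).
  assert (hK : 1 <= K) by (unfold K; pose proof (Rabs_pos l); lra).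
  set (w := Rmax ws 1 + 2 * K / eps).
  assert (heps : 0 < eps) by (unfold eps; lra).
  assert (hw1 : ws <= w /\ 1 <= w /\ 2 * K / eps <= w).
  { unfold w. pose proof (Rmax_l ws 1). pose proof (Rmax_r ws 1).
    assert (0 < 2 * K / eps) by (unfold Rdiv; apply Rmult_lt_0_compat; [lra|apply Rinv_0_lt_compat; lra]).
    lra. }
  specialize (H w (proj1 hw1)).
  pose proof (Phi_lb r w hr). pose proof (Psi_bounds w ltac:(lra)).
  pose proof (exp_sq_lb w ltac:(lra)). pose proof (exp_ineq1_le w).
  pose proof (exp_pos w).
  assert (hb : Gt r l w >= 1 - K / w).
  { unfold Gt.
    assert (l * Psi w <= Rabs l * ((1 + w) / exp w)).
    { apply Rle_trans with (Rabs l * Psi w). 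
      destruct (Rle_dec 0 l). rewrite Rabs_right by lra. lra.
      rewrite Rabs_left by lra. nra.
      apply Rmult_le_compat_l. apply Rabs_pos. lra. }
    assert (1 - K / w <= exp w / (1 + exp w) - Rabs l * ((1 + w) / exp w)); [|lra].
    unfold K. pose proof (Rabs_pos l). set (a := Rabs l) in *.
    set (X := exp w) in *.
    assert (X / (1 + X) >= 1 - / X).
    { apply Rle_ge. replace (X / (1+X)) with (1 - / (1 + X)) by (field; lra).
      apply Rplus_le_compat_l, Ropp_le_contravar, Rinv_le_contravar; lra. }
    assert ((1 + 5 * a) / w >= / X + a * ((1 + w) / X)); [|lra].
    apply Rle_ge.
    replace (/ X + a * ((1 + w) / X)) with ((w + a * w + a * w * w) / (w * X)) by (field; lra).
    replace ((1 + 5 * a) / w) with ((1 + 5*a) * X / (w * X)) by (field; lra).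
    apply Rmult_le_compat_r. left; apply Rinv_0_lt_compat; nra.
    nra. }
  assert (K / w <= eps / 2).
  { destruct hw1 as [_ [hw2 hw3]].
    apply Rmult_le_reg_r with (2 * w / eps).
    apply Rmult_lt_0_compat. lra. apply Rinv_0_lt_compat; lra.
    replace (K / w * (2 * w / eps)) with (2*K/eps) by (field; lra).
    replace (eps / 2 * (2 * w / eps)) with w by (field; lra). lra. }
  unfold eps in *. lra.
Qed.

End Calc.

Lemma Rpower_pos x y : 0 < Rpower x y.
Proof. unfold Rpower. apply exp_pos. Qed.

Lemma ln_div_ x y : 0 < x -> 0 < y -> ln (x / y) = ln x - ln y.
Proof. intros. unfold Rdiv. rewrite ln_mult by (auto; apply Rinv_0_lt_compat; auto). rewrite ln_Rinv by auto. ring. Qed.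

Lemma Fbsc_Phi r d : -1 < r -> 0 < d < 1 ->
  Fbsc r d = Rpower 2 (- r) * Calc.Phi r (ln ((1 - d) / d)).
Proof.
  intros hr hd. unfold Fbsc, Calc.Phi, Calc.Lf, Calc.sg, powr.
  destruct (Rlt_dec 0 d) as [_|c]; [|lra].
  destruct (Rlt_dec 0 (1-d)) as [_|c]; [|lra].
  f_equal.
  rewrite ln_div_ by lra.
  assert (e0 : exp (ln (1 - d) - ln d) = (1 - d) / d).
  { rewrite <- ln_div_ by lra. apply exp_ln. apply Rdiv_lt_0_compat; lra. }
  rewrite e0.
  set (s := / (1 + r)).
  assert (e1 : exp (s * (ln (1 - d) - ln d)) = Rpower (1-d) s / Rpower d s).
  { unfold Rpower. replace (s * (ln (1 - d) - ln d)) with (s * ln (1-d) + - (s * ln d)) by ring.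
    rewrite exp_plus, exp_Ropp. reflexivity. }
  rewrite e1.
  pose proof (Rpower_pos d s). pose proof (Rpower_pos (1-d) s).
  replace (1 + Rpower (1 - d) s / Rpower d s) with ((Rpower d s + Rpower (1-d) s) / Rpower d s) by (field; lra).
  rewrite ln_div_ by lra.
  assert (e2 : ln (Rpower d s) = s * ln d) by (apply ln_Rpower).
  rewrite e2.
  replace ((1 + r) * (ln (Rpower d s + Rpower (1 - d) s) - s * ln d)) with
     ((1 + r) * ln (Rpower d s + Rpower (1 - d) s) + - ln d) by (unfold s; field; lra).
  rewrite exp_plus, exp_Ropp, exp_ln by lra.
  unfold Rpower at 1. field. lra.
Qed.

Lemma ln2_pos : 0 < ln 2.
Proof. pose proof ln_lt_2. lra. Qed.

Lemma hb_Psi d : 0 < d < 1 -> hb d = Calc.Psi (ln ((1 - d) / d)) / ln 2.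
Proof.
  intros hd. unfold hb, Calc.Psi, log2.
  destruct (Rlt_dec 0 d) as [_|c]; [|lra].
  destruct (Rlt_dec 0 (1-d)) as [_|c]; [|lra].
  rewrite exp_ln by (apply Rdiv_lt_0_compat; lra).
  replace (1 + (1 - d) / d) with (/ d) by (field; lra).
  rewrite ln_Rinv by lra. rewrite ln_div_ by lra.
  pose proof ln2_pos. field. split; lra.
Qed.

Lemma Rpower1 x : Rpower 1 x = 1.
Proof. unfold Rpower. rewrite ln_1, Rmult_0_r. apply exp_0. Qed.

Lemma Fbsc0 r : Fbsc r 0 = Rpower 2 (- r).
Proof.
  unfold Fbsc, powr. destruct (Rlt_dec 0 0); [lra|].
  destruct (Rlt_dec 0 (1-0)); [|lra].
  replace (1-0) with 1 by ring. rewrite !Rpower1, Rplus_0_l, Rpower1. ring.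
Qed.

Lemma hb0 : hb 0 = 0.
Proof.
  unfold hb. destruct (Rlt_dec 0 0); [lra|].
  destruct (Rlt_dec 0 (1-0)); [|lra]. replace (1-0) with 1 by ring.
  unfold log2. rewrite ln_1. field. pose proof ln2_pos; lra.
Qed.

Lemma hbhalf : hb (/2) = 1.
Proof.
  unfold hb. destruct (Rlt_dec 0 (/2)); [|lra].
  destruct (Rlt_dec 0 (1-/2)); [|lra]. replace (1-/2) with (/2) by field.
  unfold log2. rewrite ln_Rinv by lra. field. pose proof ln2_pos; lra.
Qed.

Lemma Fbschalf r : -1 < r -> Fbsc r (/2) = 1.
Proof.
  intros hr. unfold Fbsc, powr. destruct (Rlt_dec 0 (/2)); [|lra].
  destruct (Rlt_dec 0 (1-/2)); [|lra]. replace (1-/2) with (/2) by field.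
  unfold Rpower. rewrite <- exp_plus.
  replace (exp (/ (1 + r) * ln (/ 2)) + exp (/ (1 + r) * ln (/ 2))) with (exp (ln 2 + / (1 + r) * ln (/ 2))).
  2:{ rewrite exp_plus, exp_ln by lra. ring. }
  rewrite ln_exp, ln_Rinv by lra.
  replace (- r * ln 2 + (1 + r) * (ln 2 + / (1 + r) * - ln 2)) with 0 by (field; lra).
  apply exp_0.
Qed.

Lemma tangent_d r ds : -1 < r -> 0 < ds < /2 -> exists lam, forall d, 0 <= d <= /2 ->
  Fbsc r d <= Fbsc r ds + lam * (hb d - hb ds).
Proof.
  intros hr hds.
  set (ws := ln ((1 - ds) / ds)).
  assert (hws : 0 < ws).
  { unfold ws. rewrite <- ln_1. apply ln_increasing. lra.
    apply Rmult_lt_reg_r with ds. lra. unfold Rdiv. rewrite Rmult_assoc, Rinv_l by lra. lra. }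
  set (l := Calc.RR r ws). set (c := Rpower 2 (- r)).
  assert (hc : 0 < c) by apply Rpower_pos.
  pose proof ln2_pos.
  exists (c * l * ln 2). intros d hd.
  rewrite (Fbsc_Phi r ds) by lra. rewrite (hb_Psi ds) by lra. fold ws. fold c.
  destruct (Req_dec d 0) as [e|e].
  - subst d. rewrite Fbsc0, hb0. fold c.
    assert (1 <= Calc.Gt r l ws).
    { apply Calc.Gt_limit; auto. intros w hw. apply Calc.tangent_w; auto. lra. }
    unfold Calc.Gt in H0.
    replace (c * Calc.Phi r ws + c * l * ln 2 * (0 - Calc.Psi ws / ln 2)) with
       (c * (Calc.Phi r ws - l * Calc.Psi ws)) by (field; lra).
    nra.
  - rewrite (Fbsc_Phi r d) by lra. rewrite (hb_Psi d) by lra. fold c.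
    set (w := ln ((1 - d) / d)).
    assert (hw : 0 <= w).
    { unfold w. apply Calc.ln_ge0.
      apply Rmult_le_reg_r with d. lra. unfold Rdiv. rewrite Rmult_assoc, Rinv_l by lra. lra. 
      }
    pose proof (Calc.tangent_w r ws w hr hws hw). unfold Calc.Gt in H0. fold l in H0.
    replace (c * Calc.Phi r ws + c * l * ln 2 * (Calc.Psi w / ln 2 - Calc.Psi ws / ln 2)) with
       (c * (Calc.Phi r ws - l * Calc.Psi ws) + c * (l * Calc.Psi w)) by (field; lra).
    nra.
Qed.

Lemma hb_sym d : hb (1 - d) = hb d.
Proof. unfold hb. replace (1 - (1 - d)) with d by ring. ring. Qed.

Lemma Fbsc_sym r d : Fbsc r (1 - d) = Fbsc r d.
Proof. unfold Fbsc. replace (1 - (1 - d)) with d by ring. rewrite (Rplus_comm (powr d _)). reflexivity. Qed.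

Lemma hb_int d : 0 < d < 1 -> hb d = (- (d * ln d) - (1 - d) * ln (1 - d)) / ln 2.
Proof.
  intros hd. unfold hb, log2.
  destruct (Rlt_dec 0 d) as [_|c]; [|lra].
  destruct (Rlt_dec 0 (1-d)) as [_|c]; [|lra].
  pose proof ln2_pos. field. lra.
Qed.

Lemma ln_lt_xm1 x : 0 < x -> x <> 1 -> ln x < x - 1.
Proof.
  intros hx h1. assert (ln x <> 0).
  { intro e. apply h1. rewrite <- (exp_ln x) by lra. rewrite e. apply exp_0. }
  pose proof (exp_ineq1 (ln x) H). rewrite exp_ln in H0; lra.
Qed.

Lemma hb_le1_strict d : 0 < d < 1 ->
  - (d * ln d) - (1 - d) * ln (1 - d) - ln 2 = d * ln (/ (2 * d)) + (1 - d) * ln (/ (2 * (1 - d))).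
Proof.
  intros hd. rewrite !ln_Rinv by lra. rewrite !ln_mult by lra. ring.
Qed.

Lemma hb_range d : 0 <= d <= 1 -> 0 <= hb d <= 1.
Proof.
  intros hd. pose proof ln2_pos.
  destruct (Req_dec d 0) as [e|e]. subst; rewrite hb0; lra.
  destruct (Req_dec d 1) as [e'|e']. subst. replace 1 with (1 - 0) by ring. rewrite hb_sym, hb0; lra.
  rewrite hb_int by lra. split.
  - apply Rmult_le_pos; [|left; apply Rinv_0_lt_compat; lra].
    assert (ln d < 0) by (rewrite <- ln_1; apply ln_increasing; lra).
    assert (ln (1-d) < 0) by (rewrite <- ln_1; apply ln_increasing; lra).
    nra.
  - apply Rmult_le_reg_r with (ln 2); auto. unfold Rdiv. rewrite Rmult_assoc, Rinv_l by lra.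
    assert (- (d * ln d) - (1 - d) * ln (1 - d) - ln 2 <= 0); [|lra].
    rewrite hb_le1_strict by lra.
    pose proof (Calc.ln_le_xm1 (/ (2 * d)) ltac:(apply Rinv_0_lt_compat; lra)).
    pose proof (Calc.ln_le_xm1 (/ (2 * (1 - d))) ltac:(apply Rinv_0_lt_compat; lra)).
    assert (A1 : d * ln (/ (2 * d)) <= d * (/ (2 * d) - 1)) by (apply Rmult_le_compat_l; lra).
    assert (A2 : (1-d) * ln (/ (2 * (1-d))) <= (1-d) * (/ (2 * (1-d)) - 1)) by (apply Rmult_le_compat_l; lra).
    replace (d * (/ (2 * d) - 1)) with (/2 - d) in A1 by (field; lra).
    replace ((1-d) * (/ (2 * (1-d)) - 1)) with (/2 - (1-d)) in A2 by (field; lra).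
    lra.
Qed.

Lemma hb_pos d : 0 < d <= /2 -> 0 < hb d.
Proof.
  intros hd. pose proof ln2_pos. rewrite hb_int by lra.
  apply Rdiv_lt_0_compat; auto.
  assert (ln d < 0) by (rewrite <- ln_1; apply ln_increasing; lra).
  assert (ln (1-d) < 0) by (rewrite <- ln_1; apply ln_increasing; lra).
  nra.
Qed.

Lemma hb_lt1 d : 0 <= d < /2 -> hb d < 1.
Proof.
  intros hd. pose proof ln2_pos.
  destruct (Req_dec d 0) as [e|e]. subst; rewrite hb0; lra.
  rewrite hb_int by lra.
  apply Rmult_lt_reg_r with (ln 2); auto. unfold Rdiv. rewrite Rmult_assoc, Rinv_l by lra.
  assert (- (d * ln d) - (1 - d) * ln (1 - d) - ln 2 < 0); [|lra].
  rewrite hb_le1_strict by lra.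
  assert (/ (2 * d) <> 1).
  { intro h. assert (2 * d = 1). { rewrite <- (Rinv_inv (2*d)), h. apply Rinv_1. } lra. }
  pose proof (ln_lt_xm1 (/ (2 * d)) ltac:(apply Rinv_0_lt_compat; lra) H0).
  pose proof (Calc.ln_le_xm1 (/ (2 * (1 - d))) ltac:(apply Rinv_0_lt_compat; lra)).
  assert (A1 : d * ln (/ (2 * d)) < d * (/ (2 * d) - 1)) by (apply Rmult_lt_compat_l; lra).
  assert (A2 : (1-d) * ln (/ (2 * (1-d))) <= (1-d) * (/ (2 * (1-d)) - 1)) by (apply Rmult_le_compat_l; lra).
  replace (d * (/ (2 * d) - 1)) with (/2 - d) in A1 by (field; lra).
  replace ((1-d) * (/ (2 * (1-d)) - 1)) with (/2 - (1-d)) in A2 by (field; lra).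
  lra.
Qed.

Lemma chord r d : -1 < r -> 0 <= d <= /2 ->
  Rpower 2 (- r) * (1 - hb d) + hb d <= Fbsc r d.
Proof.
  intros hr hd.
  destruct (Req_dec d 0) as [e|e]. subst; rewrite hb0, Fbsc0; lra.
  destruct (Req_dec d (/2)) as [e'|e']. subst; rewrite hbhalf, Fbschalf; lra.
  destruct (tangent_d r d hr ltac:(lra)) as [lam H].
  pose proof (H 0 ltac:(lra)). pose proof (H (/2) ltac:(lra)).
  rewrite Fbsc0, hb0 in H0. rewrite Fbschalf, hbhalf in H1 by auto.
  pose proof (hb_range d ltac:(lra)).
  set (t := hb d) in *.
  assert (0 <= (1 - t) * (Fbsc r d + lam * (0 - t) - Rpower 2 (- r))) by (apply Rmult_le_pos; lra).
  assert (0 <= t * (Fbsc r d + lam * (1 - t) - 1)) by (apply Rmult_le_pos; lra).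
  nra.
Qed.

Definition ssum (l : list nat) (f : nat -> R) : R := Rsum_list (map f l).

Lemma ssum_plus l f g : ssum l (fun y => f y + g y) = ssum l f + ssum l g.
Proof. induction l; simpl; unfold ssum in *; simpl; [ring|]. rewrite IHl. ring. Qed.

Lemma ssum_scal l c f : ssum l (fun y => c * f y) = c * ssum l f.
Proof. induction l; simpl; unfold ssum in *; simpl; [ring|]. rewrite IHl. ring. Qed.

Lemma ssum_ext l f g : (forall y, In y l -> f y = g y) -> ssum l f = ssum l g.
Proof.
  induction l; intros H; unfold ssum in *; simpl; auto.
  rewrite H by (left; auto). rewrite IHl; auto. intros; apply H; right; auto.
Qed.

Lemma ssum_le l f g : (forall y, In y l -> f y <= g y) -> ssum l f <= ssum l g.
Proof.
  induction l; intros H; unfold ssum in *; simpl. lra.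
  pose proof (H a (or_introl eq_refl)). pose proof (IHl (fun y hy => H y (or_intror hy))). lra.
Qed.

Lemma ssum_nonneg l f : (forall y, In y l -> 0 <= f y) -> 0 <= ssum l f.
Proof.
  intros H. replace 0 with (ssum l (fun _ => 0)). apply ssum_le; auto.
  induction l; unfold ssum in *; simpl; auto. rewrite IHl. ring. intros; apply H; right; auto.
Qed.

Lemma ssum_zero l f : (forall y, In y l -> 0 <= f y) -> ssum l f = 0 -> forall y, In y l -> f y = 0.
Proof.
  induction l; intros H e y hy; simpl in hy. contradiction.
  unfold ssum in e; simpl in e. fold (ssum l f) in e.
  pose proof (H a (or_introl eq_refl)).
  pose proof (ssum_nonneg l f (fun y hy => H y (or_intror hy))).
  destruct hy as [<-|hy]. lra.
  apply IHl; auto. intros; apply H; right; auto. lra.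
Qed.

Lemma main_ineq r (l : list nat) (p d : nat -> R) eps :
  -1 < r ->
  (forall y, In y l -> 0 <= p y) ->
  (forall y, In y l -> 0 <= d y <= /2) ->
  ssum l p = 1 ->
  0 <= eps <= /2 ->
  hb eps = ssum l (fun y => p y * hb (d y)) ->
  Fbec r (ssum l (fun y => p y * (1 - hb (d y)))) <= ssum l (fun y => p y * Fbsc r (d y)) /\
  ssum l (fun y => p y * Fbsc r (d y)) <= Fbsc r eps.
Proof.
  intros hr hp hd hs he hh. split.
  - unfold Fbec.
    replace (1 + (Rpower 2 (- r) - 1) * ssum l (fun y => p y * (1 - hb (d y)))) with
      (ssum l (fun y => p y * (Rpower 2 (- r) * (1 - hb (d y)) + hb (d y)))).
    + apply ssum_le. intros y hy. apply Rmult_le_compat_l; auto. apply chord; auto.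
    + rewrite (ssum_ext l _ (fun y => p y + (Rpower 2 (- r) - 1) * (p y * (1 - hb (d y))))) by (intros; ring).
      rewrite ssum_plus, ssum_scal, hs. reflexivity.
  - destruct (Req_dec eps 0) as [e0|e0].
    { subst eps. rewrite hb0 in hh.
      assert (hz := ssum_zero l (fun y => p y * hb (d y))).
      replace (Fbsc r 0) with (ssum l (fun y => p y * Fbsc r 0)).
      2:{ rewrite (ssum_ext l _ (fun y => Fbsc r 0 * p y)) by (intros; ring).
          rewrite ssum_scal, hs. ring. }
      apply ssum_le. intros y hy.
      assert (p y * hb (d y) = 0).
      { apply hz; auto. intros z hz'. apply Rmult_le_pos; auto. apply hb_range. pose proof (hd z hz'); lra. }
      destruct (Rmult_integral _ _ H) as [h|h]. rewrite h; lra.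
      destruct (Req_dec (d y) 0) as [h'|h']. rewrite h'; lra.
      pose proof (hb_pos (d y) ltac:(pose proof (hd y hy); lra)). lra. }
    destruct (Req_dec eps (/2)) as [e1|e1].
    { subst eps. rewrite hbhalf in hh.
      assert (hz := ssum_zero l (fun y => p y * (1 - hb (d y)))).
      replace (Fbsc r (/2)) with (ssum l (fun y => p y * Fbsc r (/2))).
      2:{ rewrite (ssum_ext l _ (fun y => Fbsc r (/2) * p y)) by (intros; ring).
          rewrite ssum_scal, hs. ring. }
      apply ssum_le. intros y hy.
      assert (p y * (1 - hb (d y)) = 0).
      { apply hz; auto. intros z hz'. apply Rmult_le_pos; auto.
        pose proof (hb_range (d z)) as hr'. pose proof (hd z hz'). lra.
        replace (fun y => p y * (1 - hb (d y))) with (fun y => p y + (-1) * (p y * hb (d y))).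
        2:{ apply FunctionalExtensionality.functional_extensionality; intros; ring. }
        rewrite ssum_plus, ssum_scal. lra. }
      destruct (Rmult_integral _ _ H) as [h|h]. rewrite h; lra.
      destruct (Req_dec (d y) (/2)) as [h'|h']. rewrite h'; lra.
      pose proof (hb_lt1 (d y) ltac:(pose proof (hd y hy); lra)). lra. }
    destruct (tangent_d r eps hr ltac:(lra)) as [lam H].
    apply Rle_trans with (ssum l (fun y => p y * (Fbsc r eps + lam * (hb (d y) - hb eps)))).
    + apply ssum_le. intros y hy. apply Rmult_le_compat_l; auto.
    + replace (ssum l (fun y => p y * (Fbsc r eps + lam * (hb (d y) - hb eps)))) with
        ((Fbsc r eps - lam * hb eps) * ssum l p + lam * ssum l (fun y => p y * hb (d y))).
      rewrite hs, <- hh. lra.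
      rewrite <- ssum_scal, <- ssum_scal, <- ssum_plus. apply ssum_ext; intros; ring.
Qed.

Lemma powr_nonneg z s : 0 <= powr z s.
Proof. unfold powr. destruct (Rlt_dec 0 z). left; apply Rpower_pos. lra. Qed.

Lemma powr_scale u z s : 0 < u -> 0 <= z -> powr z s = Rpower u s * powr (z / u) s.
Proof.
  intros hu hz. unfold powr.
  destruct (Rlt_dec 0 z) as [h|h]; destruct (Rlt_dec 0 (z/u)) as [h'|h'].
  - rewrite Rpower_mult_distr by auto. f_equal. field. lra.
  - exfalso. apply h'. apply Rdiv_lt_0_compat; auto.
  - exfalso. assert (z = 0) by lra. subst. unfold Rdiv in h'. lra.
  - ring.
Qed.

Lemma colT r a b x : -1 < r -> 0 <= a -> 0 <= b -> 0 < a + b -> (x = a \/ x = b) ->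
  (if Rlt_dec 0 x then x * Rpower ((/2 * (powr a (/(1+r)) + powr b (/(1+r)))) / powr x (/(1+r))) r else 0)
  = (a + b) * Rpower 2 (- r) * Rpower (powr (a/(a+b)) (/(1+r)) + powr (b/(a+b)) (/(1+r))) r
     * powr (x/(a+b)) (/(1+r)).
Proof.
  intros hr ha hb hu hx. set (s := /(1+r)). set (u := a + b).
  assert (hu' : 0 < u) by (unfold u; lra).
  assert (hx0 : 0 <= x) by (destruct hx; subst; auto).
  destruct (Rlt_dec 0 x) as [h|h].
  2:{ assert (x = 0) by lra. subst x.
      assert (powr (0/u) s = 0) as ->. { unfold powr. destruct (Rlt_dec 0 (0/u)) as [c|c]; auto.
         unfold Rdiv in c. lra. }
      ring. }
  rewrite (powr_scale u a s), (powr_scale u b s), (powr_scale u x s) by (auto; lra).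
  set (pa := powr (a/u) s). set (pb := powr (b/u) s).
  assert (hpx : powr (x/u) s = Rpower (x/u) s).
  { unfold powr. destruct (Rlt_dec 0 (x/u)) as [_|c]; auto. exfalso; apply c; apply Rdiv_lt_0_compat; auto. }
  rewrite hpx. set (al := Rpower (x/u) s).
  assert (hal : 0 < al) by apply Rpower_pos.
  assert (hS : 0 < pa + pb).
  { pose proof (powr_nonneg (a/u) s); pose proof (powr_nonneg (b/u) s).
    unfold pa, pb. destruct hx as [e|e]; rewrite e in hpx; rewrite hpx;
    pose proof (Rpower_pos (a/u) s); pose proof (Rpower_pos (b/u) s); lra. }
  assert (hU : 0 < Rpower u s) by apply Rpower_pos.
  replace (/ 2 * (Rpower u s * pa + Rpower u s * pb) / (Rpower u s * al)) with ((pa + pb) / (2 * al)) by (field; lra).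
  unfold Rpower at 1 2 3.
  rewrite ln_div_ by lra. rewrite ln_mult by lra.
  assert (eal : ln al = s * ln (x / u)) by (apply ln_Rpower).
  rewrite eal.
  assert (ex : x = u * exp (ln (x/u))).
  { rewrite exp_ln by (apply Rdiv_lt_0_compat; lra). field. lra. }
  rewrite ex at 1.
  unfold al, Rpower.
  assert (hrs : r * s = 1 - s) by (unfold s; field; lra).
  replace (u * exp (ln (x / u)) * exp (r * (ln (pa + pb) - (ln 2 + s * ln (x / u)))))
    with (u * exp (- r * ln 2 + r * ln (pa + pb) + s * ln (x / u))).
  2:{ rewrite Rmult_assoc. rewrite <- exp_plus. f_equal. f_equal.
      replace (r * (ln (pa + pb) - (ln 2 + s * ln (x / u)))) with (r * ln (pa + pb) - r * ln 2 - (r * s) * ln (x/u)) by ring.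
      rewrite hrs. ring. }
  rewrite !exp_plus. ring.
Qed.

Definition dl (W : bool -> nat -> R) y :=
  if Rlt_dec 0 (W false y + W true y) then W true y / (W false y + W true y) else 0.

Lemma in_seq0 n y : In y (seq 0 n) -> (y < n)%nat.
Proof. intros h. apply in_seq in h. lia. Qed.

Lemma sumY_ssum n f : sumY n f = ssum (seq 0 n) f.
Proof. reflexivity. Qed.

Lemma Fch_decomp r n W : -1 < r -> is_channel n W ->
  Fch n W r = ssum (seq 0 n) (fun y => PY W y * Fbsc r (dl W y)).
Proof.
  intros hr [hnn _]. unfold Fch. unfold sumX at 1. rewrite !sumY_ssum.
  rewrite <- !ssum_scal, <- ssum_plus. apply ssum_ext. intros y hy.
  apply in_seq0 in hy. pose proof (hnn false y hy). pose proof (hnn true y hy).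
  cbv beta. unfold PY, sumX, dl.
  set (a := W false y) in *. set (b := W true y) in *.
  destruct (Rlt_dec 0 (a + b)) as [hu|hu].
  - rewrite (colT r a b a), (colT r a b b) by auto.
    unfold Fbsc. replace (1 - b / (a + b)) with (a / (a + b)) by (field; lra).
    set (S := powr (a / (a + b)) (/ (1 + r)) + powr (b / (a + b)) (/ (1 + r))).
    rewrite (Rplus_comm (powr (b / (a + b)) _)). fold S.
    replace (1 + r) with (r + 1) at 3 by ring. rewrite Rpower_plus.
    assert (hS : 0 < S).
    { unfold S. unfold powr. destruct (Rlt_dec 0 (a/(a+b))) as [h1|h1]; destruct (Rlt_dec 0 (b/(a+b))) as [h2|h2].
      - pose proof (Rpower_pos (a/(a+b)) (/(1+r))); pose proof (Rpower_pos (b/(a+b)) (/(1+r))); lra.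
      - pose proof (Rpower_pos (a/(a+b)) (/(1+r))); lra.
      - pose proof (Rpower_pos (b/(a+b)) (/(1+r))); lra.
      - exfalso. assert (a / (a+b) + b / (a+b) = 1) by (field; lra). lra. }
    rewrite Rpower_1 by auto. unfold S. ring.
  - assert (a = 0) by lra. assert (b = 0) by lra.
    destruct (Rlt_dec 0 a); [lra|]. destruct (Rlt_dec 0 b); [lra|].
    rewrite H1, H2. ring.
Qed.

Lemma colK a b x : 0 <= a -> 0 <= b -> 0 < a + b -> 0 <= x ->
  (if Rlt_dec 0 x then x * log2 (x / (/ 2 * (a + b))) else 0) =
  x + (a + b) * (if Rlt_dec 0 (x / (a + b)) then x / (a + b) * log2 (x / (a + b)) else 0).
Proof.
  intros ha hb hu hx.
  destruct (Rlt_dec 0 x) as [h|h]; destruct (Rlt_dec 0 (x/(a+b))) as [h'|h'].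
  - unfold log2. replace (x / (/ 2 * (a + b))) with (2 * (x / (a+b))) by (field; lra).
    rewrite ln_mult by lra. pose proof ln2_pos. field. lra.
  - exfalso; apply h'; apply Rdiv_lt_0_compat; lra.
  - exfalso. assert (x = 0) by lra. subst. unfold Rdiv in h'. lra.
  - assert (x = 0) by lra. subst. ring.
Qed.

Lemma cap_decomp n W : is_channel n W ->
  capacity n W = ssum (seq 0 n) (fun y => PY W y * (1 - hb (dl W y))).
Proof.
  intros [hnn _]. unfold capacity. unfold sumX at 1. rewrite !sumY_ssum.
  rewrite <- !ssum_scal, <- ssum_plus. apply ssum_ext. intros y hy.
  apply in_seq0 in hy. pose proof (hnn false y hy). pose proof (hnn true y hy).
  cbv beta. unfold PY, sumX, dl.
  set (a := W false y) in *. set (b := W true y) in *.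
  destruct (Rlt_dec 0 (a + b)) as [hu|hu].
  - rewrite (colK a b a), (colK a b b) by auto.
    unfold hb. replace (1 - b / (a + b)) with (a / (a + b)) by (field; lra).
    ring.
  - assert (a = 0) by lra. assert (b = 0) by lra.
    destruct (Rlt_dec 0 a); [lra|]. destruct (Rlt_dec 0 b); [lra|].
    rewrite H1, H2. ring.
Qed.

Lemma pointwise n W eps r : BIMS n W -> 0 <= eps <= /2 -> hb eps = 1 - capacity n W -> -1 < r ->
  0 < Fbec r (capacity n W) /\ Fbec r (capacity n W) <= Fch n W r /\ Fch n W r <= Fbsc r eps.
Proof.
  intros [hch _] he hh hr.
  destruct hch as [hnn hsum].
  set (l := seq 0 n).
  set (d := fun y => Rmin (dl W y) (1 - dl W y)).
  assert (hp : forall y, In y l -> 0 <= PY W y).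
  { intros y hy. apply in_seq0 in hy. unfold PY, sumX.
    pose proof (hnn false y hy). pose proof (hnn true y hy). lra. }
  assert (hs : ssum l (PY W) = 1).
  { unfold l. unfold PY, sumX.
    rewrite ssum_scal, ssum_plus. rewrite <- !sumY_ssum. rewrite !hsum. field. }
  assert (hdl : forall y, In y l -> 0 <= dl W y <= 1).
  { intros y hy. apply in_seq0 in hy.
    pose proof (hnn false y hy). pose proof (hnn true y hy).
    unfold dl. destruct (Rlt_dec 0 (W false y + W true y)) as [h|h]; [|lra].
    split. unfold Rdiv; apply Rmult_le_pos; [lra|left; apply Rinv_0_lt_compat; lra].
    apply Rmult_le_reg_r with (W false y + W true y); auto.
    unfold Rdiv. rewrite Rmult_assoc, Rinv_l by lra. lra. }
  assert (hd : forall y, In y l -> 0 <= d y <= /2).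
  { intros y hy. unfold d. pose proof (hdl y hy).
    unfold Rmin. destruct (Rle_dec (dl W y) (1 - dl W y)); lra. }
  assert (hF : forall y, Fbsc r (d y) = Fbsc r (dl W y)).
  { intros y. unfold d, Rmin. destruct (Rle_dec (dl W y) (1 - dl W y)); auto. apply Fbsc_sym. }
  assert (hH : forall y, hb (d y) = hb (dl W y)).
  { intros y. unfold d, Rmin. destruct (Rle_dec (dl W y) (1 - dl W y)); auto. apply hb_sym. }
  assert (hcap : capacity n W = ssum l (fun y => PY W y * (1 - hb (d y)))).
  { rewrite cap_decomp by (split; auto). apply ssum_ext. intros; rewrite hH; auto. }
  assert (hfch : Fch n W r = ssum l (fun y => PY W y * Fbsc r (d y))).
  { rewrite Fch_decomp by (auto; split; auto). apply ssum_ext. intros; rewrite hF; auto. }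
  assert (hh' : hb eps = ssum l (fun y => PY W y * hb (d y))).
  { rewrite hh, hcap.
    rewrite (ssum_ext l (fun y => PY W y * (1 - hb (d y))) (fun y => PY W y + (-1) * (PY W y * hb (d y)))) by (intros; ring).
    rewrite ssum_plus, ssum_scal, hs. ring. }
  destruct (main_ineq r l (PY W) d eps hr hp hd hs he hh') as [h1 h2].
  rewrite <- hcap in h1. rewrite <- hfch in h1, h2.
  split; [|split; auto].
  assert (0 <= capacity n W <= 1).
  { rewrite hcap. split.
    - apply ssum_nonneg. intros y hy. apply Rmult_le_pos; auto.
      pose proof (hb_range (d y)) as hb'. pose proof (hd y hy). lra.
    - rewrite <- hs. apply ssum_le. intros y hy.
      pose proof (hb_range (d y)) as hb'. pose proof (hd y hy). pose proof (hp y hy). nra. }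
  unfold Fbec. pose proof (Rpower_pos 2 (- r)). nra.
Qed.

Lemma sup_mono (P Q : R -> Prop) : (exists x, P x) ->
  (forall v, P v -> exists v', Q v' /\ v <= v') -> Rbar_le (Rbar_sup P) (Rbar_sup Q).
Proof.
  intros hne hPQ. unfold Rbar_sup.
  destruct (excluded_middle_informative (exists x, Q x)) as [neQ|nQ].
  2:{ exfalso. destruct hne as [x hx]. destruct (hPQ x hx) as [v [hv _]]. apply nQ; eauto. }
  destruct (excluded_middle_informative (bound Q)) as [bQ|nbQ].
  2:{ destruct (excluded_middle_informative (exists x, P x)); simpl; auto.
      destruct (excluded_middle_informative (bound P)); simpl; auto. }
  destruct (excluded_middle_informative (exists x, P x)) as [neP|nP]; [|simpl; auto].
  destruct (excluded_middle_informative (bound P)) as [bP|nbP].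
  - destruct (completeness P bP neP) as [sP [ubP lubP]].
    destruct (completeness Q bQ neQ) as [sQ [ubQ lubQ]]. simpl.
    apply lubP. intros v hv. destruct (hPQ v hv) as [v' [hv' hle]].
    apply Rle_trans with v'; auto.
  - exfalso. apply nbP. destruct bQ as [m hm]. exists m. intros v hv.
    destruct (hPQ v hv) as [v' [hv' hle]]. apply Rle_trans with v'; auto.
Qed.

Lemma log2_le x y : 0 < x -> x <= y -> log2 x <= log2 y.
Proof.
  intros hx [h|h]. unfold log2. apply Rmult_le_compat_r. left; apply Rinv_0_lt_compat, ln2_pos.
  left; apply ln_increasing; auto. subst; lra.
Qed.

Lemma E0_order n W eps r : BIMS n W -> 0 <= eps <= /2 -> hb eps = 1 - capacity n W -> -1 < r ->
  E0bsc eps r <= E0ch n W r /\ E0ch n W r <= E0bec (capacity n W) r.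
Proof.
  intros hB he hh hr. destruct (pointwise n W eps r hB he hh hr) as [h0 [h1 h2]].
  unfold E0bsc, E0ch, E0bec. split.
  - apply Ropp_le_contravar. apply log2_le; lra.
  - apply Ropp_le_contravar. apply log2_le; lra.
Qed.

Theorem mainTheorem10 :
  forall (n : nat) (W : bool -> nat -> R),
    BIMS n W ->
    forall (eps : R), 0 <= eps <= / 2 -> hb eps = 1 - capacity n W ->
    forall (Rt : R), 0 <= Rt ->
      (Rbar_le (Esc (E0bsc eps) Rt) (Esc (E0ch n W) Rt) /\
       Rbar_le (Esc (E0ch n W) Rt) (Esc (E0bec (capacity n W)) Rt)) /\
      (Rbar_le (Esp (E0bsc eps) Rt) (Esp (E0ch n W) Rt) /\
       Rbar_le (Esp (E0ch n W) Rt) (Esp (E0bec (capacity n W)) Rt)) /\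
      (Rbar_le (Egfb (E0bsc eps) Rt) (Egfb (E0ch n W) Rt) /\
       Rbar_le (Egfb (E0ch n W) Rt) (Egfb (E0bec (capacity n W)) Rt)).
Proof.
  intros n W hB eps he hh Rt hR.
  pose proof (fun r hr => E0_order n W eps r hB he hh hr) as HO.
  unfold Esc, Esp, Egfb.
  repeat split; apply sup_mono.
  all: try (exists (E0bsc eps 0 - 0 * Rt); exists 0; split; [lra|reflexivity]).
  all: try (exists (E0ch n W 0 - 0 * Rt); exists 0; split; [lra|reflexivity]).
  all: try (exists (E0bsc eps 1 - 1 * Rt); exists 1; split; [lra|reflexivity]).
  all: try (exists (E0ch n W 1 - 1 * Rt); exists 1; split; [lra|reflexivity]).
  all: try (exists ((E0bsc eps 0 - 0 * Rt) / (1 + 0)); exists 0; split; [lra|reflexivity]).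
  all: try (exists ((E0ch n W 0 - 0 * Rt) / (1 + 0)); exists 0; split; [lra|reflexivity]).
  all: intros v [r [hr ->]].
  all: destruct (HO r ltac:(lra)) as [o1 o2].
  all: try (eexists; split; [exists r; split; [exact hr|reflexivity]|]).
  all: try lra.
  all: apply Rmult_le_compat_r; [left; apply Rinv_0_lt_compat; lra|lra].
Qed.
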